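(* Let $A$ be an ERNNA without $\epsilon$-transitions, of degree $k$ and with $n$ orbits. Then (1) $L_\alpha(A)=L_\alpha(\mathrm{nd}(A))$; (2) $L_0(\mathrm{nd}(A))$ is closed under $\alpha$-equivalence; and moreover $\mathrm{nd}(A)$ is of degree $k$ and has at most $n\cdot 2^k$ orbits.
   Context: Names $\mathbb{A}$ countably infinite, $G$ finite permutations; nominal sets (each element has a least finite support $\mathrm{supp}(x)$), orbits, equivariance as usual; $\mathrm{Fix}(N)=\{\pi\in G\mid\pi(a)=a\ \forall a\in N\}$. $[\mathbb{A}]X$: $\mathbb{A}\times X$ modulo $(a,x)\sim(b,y)$ iff $(a\,c)\cdot x=(b\,c)\cdot y$ for some $c$ outside the supports; class $\langle a\rangle x$. $\overline{\mathbb{A}}=\mathbb{A}\cup\{|a\}$; bar strings are words over it; $\equiv_\alpha$ is the least equivalence with $w|av\equiv_\alpha w|bu$ whenever $\langle a\rangle v=\langle b\rangle u$. Free occurrence of plain $a$: no $|a$ to its left; $\mathrm{FN}(w)$; $[S]=\{w\mid\mathrm{FN}(w)\subseteq S\}$. ERNNA $A=(Q,\to,s,f)$: orbit-finite nominal $Q$, $\mathrm{supp}(s)=\emptyset$, equivariant $\to\subseteq Q\times(\overline{\mathbb{A}}\cup\{\epsilon\})\times Q$, equivariant $f:Q\to\{0,1,\top\}$; $q\xrightarrow{|a}q'$, $\langle a\rangle q'=\langle b\rangle q''$ imply $q\xrightarrow{|b}q''$; finite branching up to $\alpha$-equivalence ($\{(a,q')\mid q\xrightarrow{a}q'\}$,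 $\{q'\mid q\xrightarrow{\epsilon}q'\}$, $\{\langle a\rangle q'\mid q\xrightarrow{|a}q'\}$ finite); $\top$-states have empty support and no outgoing transitions. Degree: $\max_q|\mathrm{supp}(q)|$. $L_{pre}(A)=\{(w,f(q))\mid s\xrightarrow{w}q,f(q)\in\{1,\top\}\}$, $L_0(A)=[\emptyset]\cap(\{w\mid(w,1)\in L_{pre}(A)\}\cup\{vu\mid(v,\top)\in L_{pre}(A),u\in\overline{\mathbb{A}}^*\})$, $L_\alpha(A)=L_0(A)/{\equiv_\alpha}$. Name-dropping ERNNA of an $\epsilon$-free $A=(Q,\to,s,f)$: $\mathrm{nd}(A)=(Q',\to',s',f')$ with $Q'=\{q|_N\mid q\in Q,N\subseteq\mathrm{supp}(q)\}$ where $q|_N=\{\pi\cdot q\mid\pi\in\mathrm{Fix}(N)\}$ (with action $\pi\cdot q|_N=(\pi\cdot q)|_{\pi\cdot N}$), $s'=s|_{\mathrm{supp}(s)}$, $f'(q|_N)=f(q)$, and transitions $q|_N\xrightarrow{a}{}'q'|_{N'}$ whenever $q\xrightarrow{a}q'$, $N'\subseteq N$ and $a\in N$; and $q|_N\xrightarrow{|a}{}'q'|_{N'}$ whenever $q\xrightarrow{|b}q''$, $N''\subseteq\mathrm{supp}(q'')\cap(N\cup\{b\})$ and $\langle a\rangle(q'|_{N'})=\langle b\rangle(q''|_{N''})$. *)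

(* Defs.v *)
From Stdlib Require Import FunctionalExtensionality PropExtensionality
  ProofIrrelevance IndefiniteDescription Relation_Operators.
From mathcomp Require Import all_boot.

Set Implicit Arguments.
Unset Strict Implicit.
Unset Printing Implicit Defensive.

Definition name := nat.

Record fperm := FPerm {
  pf :> name -> name;
  pinv : name -> name;
  pfK : cancel pf pinv;
  pinvK : cancel pinv pf;
  pfin : exists s : seq name, forall a, a \notin s -> pf a = a }.

Definition fperm_id : fperm.
Proof.
refine (@FPerm (fun x => x) (fun x => x) (fun _ => erefl) (fun _ => erefl) _).
by exists [::].
Defined.

Section PermOps.
Variables p q : fperm.

Lemma comp_K : cancel (fun x => p (q x)) (fun x => pinv q (pinv p x)).
Proof. by move=> x; rewrite !pfK. Qed.
Lemma comp_invK : cancel (fun x => pinv q (pinv p x)) (fun x => p (q x)).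
Proof. by move=> x; rewrite !pinvK. Qed.
Lemma comp_fin : exists s : seq name, forall a, a \notin s -> p (q a) = a.
Proof.
case: (pfin p) => sp Hp; case: (pfin q) => sq Hq; exists (sp ++ sq) => a.
by rewrite mem_cat negb_or => /andP[ap aq]; rewrite Hq // Hp.
Qed.
Definition fperm_comp : fperm := FPerm comp_K comp_invK comp_fin.

Lemma inv_fin : exists s : seq name, forall a, a \notin s -> pinv p a = a.
Proof.
case: (pfin p) => s H; exists s => a Ha.
by rewrite -{1}(H a Ha) pfK.
Qed.
Definition fperm_inv : fperm := FPerm (pinvK p) (pfK p) inv_fin.
End PermOps.

Section Swap.
Variables a b : name.
Definition sw (x : name) : name :=
  if x == a then b else if x == b then a else x.
Lemma swK : cancel sw sw.
Proof.
move=> x; rewrite /sw.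
case: (x =P a) => [->|xa]; first by case: (b =P a) => [->|]; rewrite ?eqxx.
case: (x =P b) => [->|xb]; first by rewrite eqxx.
by move/eqP/negbTE: xa => ->; move/eqP/negbTE: xb => ->.
Qed.
Lemma sw_fin : exists s : seq name, forall x, x \notin s -> sw x = x.
Proof.
exists [:: a; b] => x; rewrite !inE negb_or => /andP[/negbTE xa /negbTE xb].
by rewrite /sw xa xb.
Qed.
Definition fperm_swap : fperm := FPerm swK swK sw_fin.
End Swap.

(* G-sets (sets with a group action of G).  Nominality is a separate  *)
(* predicate below.                                                    *)
Record nomType := NomType {
  ncar :> Type;
  nact : fperm -> ncar -> ncar;
  nact_id : forall x, nact fperm_id x = x;
  nact_comp : forall p q x, nact (fperm_comp p q) x = nact p (nact q x);
  nact_ext : forall p q : fperm, pf p =1 pf q -> forall x, nact p x = nact q x }.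

Section Nominal.
Variable X : nomType.

Definition supports (x : X) (s : seq name) :=
  forall p : fperm, (forall a, a \in s -> p a = a) -> nact p x = x.

Definition least_supp (x : X) (s : seq name) :=
  supports x s /\ forall t, supports x t -> {subset s <= t}.

(* a \in supp(x): a belongs to every finite support of x
   (for a nominal set this is exactly the least finite support) *)
Definition in_supp (x : X) (a : name) := forall s, supports x s -> a \in s.

Definition is_nominal := forall x : X, exists s, least_supp x s.

Definition supp_card (x : X) (m : nat) :=
  exists s : seq name, [/\ uniq s, size s = m & forall a, in_supp x a <-> a \in s].

Definition same_orbit (x y : X) := exists p : fperm, nact p x = y.

Definition has_orbits (n : nat) :=
  exists r : nat -> X,
    (forall i j, i < n -> j < n -> same_orbit (r i) (r j) -> i = j) /\
    (forall x, exists2 i, i < n & same_orbit (r i) x).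

(* <a>x = <b>y in [A]X : (a c).x = (b c).y for some c outside the supports *)
Definition abs_eq (a : name) (x : X) (b : name) (y : X) :=
  exists c : name, [/\ c <> a /\ ~ in_supp x c, c <> b /\ ~ in_supp y c
                     & nact (fperm_swap a c) x = nact (fperm_swap b c) y].

Definition fixes (p : fperm) (N : name -> Prop) := forall a, N a -> p a = a.

Definition restr (q : X) (N : name -> Prop) : X -> Prop :=
  fun y => exists2 p, fixes p N & y = nact p q.

Definition imgset (p : fperm) (S : X -> Prop) : X -> Prop :=
  fun y => exists2 x, S x & y = nact p x.

Lemma supports_act (x : X) (p : fperm) t :
  supports (nact p x) t -> supports x (map (pinv p) t).
Proof.
move=> H s Hs.
pose tau := fperm_comp p (fperm_comp s (fperm_inv p)).
have Htau : nact tau (nact p x) = nact p x.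
  apply: H => c ct /=; rewrite Hs ?pinvK //; exact: map_f.
have E1 : nact p (nact s x) = nact p x.
  rewrite -Htau -!nact_comp; apply: nact_ext => y /=; by rewrite pfK.
have -> : nact s x = nact (fperm_inv p) (nact p (nact s x)).
  by rewrite -nact_comp -[LHS]nact_id; apply: nact_ext => y /=; rewrite pfK.
by rewrite E1 -nact_comp -[RHS]nact_id; apply: nact_ext => y /=; rewrite pfK.
Qed.

Lemma in_supp_act (x : X) (p : fperm) a :
  in_supp x (pinv p a) -> in_supp (nact p x) a.
Proof.
move=> H t Ht; case/mapP: (H _ (supports_act Ht)) => c ct e.
have -> : a = c by rewrite -(pinvK p a) e pinvK.
exact: ct.
Qed.

Lemma img_restr (x : X) (p : fperm) (N : name -> Prop) :
  imgset p (restr x N) = restr (nact p x) (fun a => N (pinv p a)).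
Proof.
apply: functional_extensionality => y; apply: propositional_extensionality.
split.
- case=> z [s Hs ->] ->.
  exists (fperm_comp p (fperm_comp s (fperm_inv p))).
    by move=> a Na /=; rewrite Hs // pinvK.
  rewrite -!nact_comp; apply: nact_ext => z0 /=; by rewrite pfK.
- case=> s Hs ->.
  exists (nact (fperm_comp (fperm_inv p) (fperm_comp s p)) x).
    exists (fperm_comp (fperm_inv p) (fperm_comp s p)) => //.
    by move=> a Na /=; rewrite Hs ?pfK // pfK.
  rewrite -!nact_comp; apply: nact_ext => z0 /=; by rewrite pinvK.
Qed.

End Nominal.

Definition blet := (bool * name)%type.
Definition Pl (a : name) : blet := (false, a).
Definition Br (a : name) : blet := (true, a).
Definition word := seq blet.

Definition bact (p : fperm) (l : blet) : blet := (l.1, p l.2).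
Definition wact (p : fperm) (w : word) : word := map (bact p) w.

Lemma wact_id w : wact fperm_id w = w.
Proof. by elim: w => //= [[c d] w ->]. Qed.
Lemma wact_comp p q w : wact (fperm_comp p q) w = wact p (wact q w).
Proof. by elim: w => //= [[c d] w ->]. Qed.
Lemma wact_ext (p q : fperm) : pf p =1 pf q -> forall w, wact p w = wact q w.
Proof. by move=> E; elim=> //= [[c d] w ->]; rewrite /bact /= E. Qed.

Definition wnom : nomType := NomType wact_id wact_comp wact_ext.

Definition fn (w : word) (a : name) :=
  exists w1 w2, w = w1 ++ Pl a :: w2 /\ Br a \notin w1.
Definition closed_word (w : word) := forall a, ~ fn w a.

Definition astep (w1 w2 : word) :=
  exists w a v b u, [/\ w1 = w ++ Br a :: v, w2 = w ++ Br b :: u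
                      & abs_eq (X := wnom) a v b u].
Definition aeq : word -> word -> Prop := clos_refl_sym_trans word astep.

Inductive fval := F0 | F1 | Ftop.

Record ernna := Ernna {
  est : nomType;
  etr : est -> option blet -> est -> Prop;   (* None = epsilon *)
  estart : est;
  efin : est -> fval }.

Definition lact (p : fperm) (l : option blet) := omap (bact p) l.

Definition is_ernna (A : ernna) :=
  [/\ is_nominal (est A),
      (exists n, has_orbits (est A) n),
      (forall a, ~ in_supp (estart A) a),
      (forall p (q : est A) l (q' : est A), etr q l q' ->
          etr (nact p q) (lact p l) (nact p q')) &
      (forall p (q : est A), efin (nact p q) = efin q)]
  /\ (forall (q : est A) a (q' : est A) b (q'' : est A), etr q (Some (Br a)) q' ->
          abs_eq a q' b q'' -> etr q (Some (Br b)) q'')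
  /\ (forall q, exists s : seq (name * est A), forall a q',
          etr q (Some (Pl a)) q' -> List.In (a, q') s)
  /\ (forall q, exists s : seq (est A), forall q',
          etr q None q' -> List.In q' s)
  /\ (forall q, exists s : seq (name * est A), forall a q',
          etr q (Some (Br a)) q' ->
          exists b q'', List.In (b, q'') s /\ abs_eq a q' b q'')
  /\ (forall q : est A, efin q = Ftop ->
          (forall a, ~ in_supp q a) /\ forall l q', ~ etr q l q').

Definition eps_free (A : ernna) := forall q q' : est A, ~ etr q None q'.

Definition degree (A : ernna) (k : nat) :=
  (forall q : est A, exists2 m, m <= k & supp_card q m) /\
  (exists q : est A, supp_card q k).

Inductive reach (A : ernna) : est A -> word -> est A -> Prop :=
| reach_nil q : reach q [::] q
| reach_eps q q' w q'' : etr q None q' -> reach q' w q'' -> reach q w q''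
| reach_let q l q' w q'' : etr q (Some l) q' -> reach q' w q'' -> reach q (l :: w) q''.

Definition Lpre (A : ernna) (w : word) (v : fval) :=
  (v = F1 \/ v = Ftop) /\ exists q, reach (estart A) w q /\ efin q = v.

Definition L0 (A : ernna) (w : word) :=
  closed_word w /\
  (Lpre A w F1 \/ exists v u, w = v ++ u /\ Lpre A v Ftop).

(* L_alpha(A) = L0(A)/alpha, represented by the union of its classes *)
Definition Lalpha (A : ernna) (w : word) := exists2 w', L0 A w' & aeq w' w.

Section NameDrop.
Variable A : ernna.
Local Notation Q := (est A).

Definition is_restr (X : Q -> Prop) :=
  exists (q : Q) (N : name -> Prop),
    (forall a, N a -> in_supp q a) /\ X = restr q N.

Definition ndcar := {X : Q -> Prop | is_restr X}.

Lemma is_restr_img p X : is_restr X -> is_restr (imgset p X).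
Proof.
case=> q [N [HN ->]]; exists (nact p q), (fun a => N (pinv p a)); split.
  by move=> a Na; apply: in_supp_act; exact: HN.
exact: img_restr.
Qed.

Definition ndact (p : fperm) (X : ndcar) : ndcar :=
  exist _ (imgset p (proj1_sig X)) (is_restr_img p (proj2_sig X)).

Lemma ndeq (X Y : ndcar) : proj1_sig X = proj1_sig Y -> X = Y.
Proof.
case: X Y => [x px] [y py] /= e; subst; f_equal; exact: proof_irrelevance.
Qed.

Lemma setext (S T : Q -> Prop) : (forall y, S y <-> T y) -> S = T.
Proof.
move=> H; apply: functional_extensionality => y.
exact: propositional_extensionality.
Qed.

Lemma ndact_id X : ndact fperm_id X = X.
Proof.
apply: ndeq; apply: setext => y /=; split; first by case=> x Hx ->; rewrite nact_id.
by move=> Hy; exists y => //; rewrite nact_id.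
Qed.

Lemma ndact_comp p q X : ndact (fperm_comp p q) X = ndact p (ndact q X).
Proof.
apply: ndeq; apply: setext => y /=; split.
  by case=> x Hx ->; exists (nact q x); [exists x|]; rewrite ?nact_comp.
by case=> z [x Hx ->] ->; exists x; rewrite ?nact_comp.
Qed.

Lemma ndact_ext (p q : fperm) : pf p =1 pf q -> forall X, ndact p X = ndact q X.
Proof.
move=> E X; apply: ndeq; apply: setext => y /=.
by split; case=> x Hx ->; exists x; rewrite // (nact_ext E).
Qed.

Definition ndnom : nomType := NomType ndact_id ndact_comp ndact_ext.

Definition is_rep (X : ndcar) (q : Q) (N : name -> Prop) :=
  (forall a, N a -> in_supp q a) /\ proj1_sig X = restr q N.

Lemma ndstart_restr : is_restr (restr (estart A) (in_supp (estart A))).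
Proof. by exists (estart A), (in_supp (estart A)). Qed.

Definition ndstart : ndcar := exist _ _ ndstart_restr.

Lemma ndcar_nonempty (X : ndcar) : exists x, proj1_sig X x.
Proof.
case: X => S [q [N [_ E]]] /=; rewrite E; exists q, fperm_id => //.
by rewrite nact_id.
Qed.

(* f'(q|_N) = f(q)  (well defined since f is equivariant) *)
Definition ndfin (X : ndcar) : fval :=
  efin (proj1_sig (constructive_indefinite_description _ (ndcar_nonempty X))).

Definition ndtr (X : ndnom) (l : option blet) (Y : ndnom) : Prop :=
  match l with
  | None => False
  | Some (false, a) =>
      exists q N q' N',
        [/\ is_rep X q N, is_rep Y q' N', etr q (Some (Pl a)) q',
            (forall c, N' c -> N c) & N a]
  | Some (true, a) =>
      exists q N q' N' b q'' N'' (Z : ndnom),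
        [/\ is_rep X q N, is_rep Y q' N', etr q (Some (Br b)) q'',
            (forall c, N'' c -> in_supp q'' c /\ (N c \/ c = b)) &
            is_rep Z q'' N'' /\ abs_eq a Y b Z]
  end.

Definition nd : ernna := @Ernna ndnom ndtr ndstart ndfin.

End NameDrop.

(* Main.v *)
Require Import Defs.
From Stdlib Require Import FunctionalExtensionality PropExtensionality ProofIrrelevance IndefiniteDescription ClassicalEpsilon Classical Relation_Operators.
From mathcomp Require Import all_boot zify.
Unset Printing Implicit Defensive.
Set Implicit Arguments. Unset Strict Implicit.

Definition fresh (s : seq name) : name := (sumn s).+1.
Lemma fresh_notin s : fresh s \notin s.
Proof.
have H: forall x, x \in s -> x <= sumn s.
  elim: s => //= y s IH x; rewrite inE => /orP[/eqP->|/IH h]; first exact: leq_addr.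
  exact: leq_trans h (leq_addl _ _).
by apply/negP => /H; rewrite /fresh ltnn.
Qed.

Lemma swE a b x : fperm_swap a b x = if x == a then b else if x == b then a else x.
Proof. by []. Qed.

Lemma natP (x y : name) : reflect (x = y) (x == y).
Proof. exact: eqP. Qed.
Ltac swt := rewrite ?swE /sw; repeat (match goal with
 | |- context [?x == ?y] => case: (natP x y) => ?
 | H : context [?x == ?y] |- _ => revert H
 end); intros; try congruence.

Lemma swap_conj (p : fperm) a c z : sw (p a) (p c) (p z) = p (sw a c z).
Proof.
rewrite /sw !(inj_eq (can_inj (pfK p))).
by case: (z == a); case: (z == c).
Qed.

Definition asb (P : Prop) : bool := if excluded_middle_informative P then true else false.
Lemma asbP (P : Prop) : asb P <-> P.
Proof. by rewrite /asb; case: excluded_middle_informative. Qed.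
Definition cfilter (P : name -> Prop) (s : seq name) := [seq x <- s | asb (P x)].
Lemma mem_cfilter P s x : x \in cfilter P s <-> P x /\ x \in s.
Proof. rewrite mem_filter; split; [case/andP => /asbP|case=> /asbP -> ->]; by []. Qed.

Lemma freshP s x : x \in s -> fresh s <> x.
Proof. by move=> xi e; move: (fresh_notin s); rewrite e xi. Qed.

Lemma sub_cat_l (s1 s2 s3 : seq name) : {subset s2 <= s1 ++ s2 ++ s3}.
Proof. by move=> z zi; rewrite !mem_cat zi !orbT. Qed.
Lemma sub_cat_m1 (s1 s2 s3 s4 : seq name) : {subset s2 <= s1 ++ s2 ++ s3 ++ s4}.
Proof. by move=> z zi; rewrite !mem_cat zi !orbT. Qed.
Lemma sub_cat_m2 (s1 s2 s3 s4 : seq name) : {subset s3 <= s1 ++ s2 ++ s3 ++ s4}.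
Proof. by move=> z zi; rewrite !mem_cat zi !orbT. Qed.
Lemma sub_cat_m2' (s1 s2 s3 : seq name) : {subset s3 <= s1 ++ s2 ++ s3}.
Proof. by move=> z zi; rewrite !mem_cat zi !orbT. Qed.

Section Nom.
Variable X : nomType.
Implicit Types x y : X.

Lemma act_inv (p : fperm) x : nact (fperm_inv p) (nact p x) = x.
Proof. by rewrite -nact_comp -[RHS]nact_id; apply: nact_ext => z /=; rewrite pfK. Qed.
Lemma act_invK (p : fperm) x : nact p (nact (fperm_inv p) x) = x.
Proof. by rewrite -nact_comp -[RHS]nact_id; apply: nact_ext => z /=; rewrite pinvK. Qed.

Lemma in_supp_eqv (p : fperm) x a : in_supp (nact p x) (p a) <-> in_supp x a.
Proof.
split=> H.
  have := in_supp_act (p := fperm_inv p) H; by rewrite act_inv.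
by apply: in_supp_act; rewrite pfK.
Qed.
Lemma in_supp_eqv' (p : fperm) x a : in_supp (nact p x) a <-> in_supp x (pinv p a).
Proof. by rewrite -{1}(pinvK p a) in_supp_eqv. Qed.

Definition nomel x := exists s, supports x s /\ forall a, in_supp x a <-> a \in s.

Lemma nomel_of_least x s : least_supp x s -> nomel x.
Proof.
case=> Hs Hl; exists s; split => // a; split; first by move/(_ s Hs).
by move=> ai t Ht; exact: Hl t Ht a ai.
Qed.

Lemma fresh_nsupp x (s L : seq name) : (forall a, in_supp x a <-> a \in s) -> {subset s <= L} ->
  ~ in_supp x (fresh L).
Proof. by move=> E sub; rewrite E => /sub; apply/negP/fresh_notin. Qed.

Lemma act_agree x s (p q : fperm) : supports x s -> (forall a : name, a \in s -> p a = q a) ->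
  nact p x = nact q x.
Proof.
move=> Hs E.
have H : nact (fperm_comp (fperm_inv q) p) x = x.
  by apply: Hs => a ai /=; rewrite E // pfK.
by rewrite -(act_invK q (nact p x)) -[nact (fperm_inv q) _]nact_comp H.
Qed.

Lemma act_fix x s (p : fperm) : supports x s -> (forall a, a \in s -> p a = a) -> nact p x = x.
Proof. by move=> Hs E; apply: Hs. Qed.

Lemma nomel_act (p : fperm) x : nomel x -> nomel (nact p x).
Proof.
case=> s [Hs E]; exists (map p s); split.
  move=> q Hq.
  have H2 : nact (fperm_comp (fperm_inv p) (fperm_comp q p)) x = x.
    apply: Hs => a ai /=; rewrite Hq ?pfK //; exact: map_f.
  rewrite -[in RHS]H2 !nact_comp act_invK //.
move=> a; rewrite in_supp_eqv' E; split.
  by move=> h; rewrite -(pinvK p a); exact: map_f.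
by case/mapP => b bi ->; rewrite pfK.
Qed.

Lemma act_conj (p : fperm) a c x :
  nact (fperm_swap (p a) (p c)) (nact p x) = nact p (nact (fperm_swap a c) x).
Proof. by rewrite -!nact_comp; apply: nact_ext => z /=; exact: swap_conj. Qed.

Lemma abs_eq_sym a x b y : abs_eq a x b y -> abs_eq b y a x.
Proof. by case=> c [h1 h2 h3]; exists c; split. Qed.

Lemma abs_eq_act (p : fperm) a x b y : abs_eq a x b y -> abs_eq (p a) (nact p x) (p b) (nact p y).
Proof.
case=> c [[ca cx] [cb cy] E]; exists (p c); split.
- split; first by move/(can_inj (pfK p)).
  by rewrite in_supp_eqv.
- split; first by move/(can_inj (pfK p)).
  by rewrite in_supp_eqv.
by rewrite !act_conj E.
Qed.

Lemma swap_invol a c (z : X) : nact (fperm_swap a c) (nact (fperm_swap a c) z) = z.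
Proof. by rewrite -nact_comp -[RHS]nact_id; apply: nact_ext => t /=; rewrite swK. Qed.

Lemma abs_eq_same a x y : abs_eq a x a y -> x = y.
Proof.
case=> c [_ _ E].
by have := f_equal (nact (fperm_swap a c)) E; rewrite !swap_invol.
Qed.


Lemma abs_eq_all a x b y : nomel x -> nomel y -> abs_eq a x b y ->
  forall c, c <> a -> c <> b -> ~ in_supp x c -> ~ in_supp y c ->
  nact (fperm_swap a c) x = nact (fperm_swap b c) y.
Proof.
case=> sx [Hx Ex]; case=> sy [Hy Ey].
case=> c0 [[c0a c0x] [c0b c0y] E] c ca cb cx cy.
case: (c =P c0) => [->//|cc0].
have K : forall d x s, supports x s -> (forall a, in_supp x a <-> a \in s) ->
    ~ in_supp x c0 -> ~ in_supp x c -> c0 <> d -> c <> d ->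
    nact (fperm_swap d c) x = nact (fperm_swap c c0) (nact (fperm_swap d c0) x).
  move=> d z s Hs Es z0 zc c0d cd; rewrite -nact_comp; apply: (act_agree Hs) => t ts /=.
  have tc0 : t <> c0 by move=> e; apply: z0; rewrite Es -e.
  have tc : t <> c by move=> e; apply: zc; rewrite Es -e.
  swt.
rewrite (K a x sx) // ?(K b y sy) // ?E //; by move=> e; subst.
Qed.

Lemma abs_eq_trans a x b y c z : nomel x -> nomel y -> nomel z ->
  abs_eq a x b y -> abs_eq b y c z -> abs_eq a x c z.
Proof.
move=> nx ny nz H1 H2.
have [sx [Hx Ex]] := nx; have [sy [Hy Ey]] := ny; have [sz [Hz Ez]] := nz.
set L := [:: a; b; c] ++ sx ++ sy ++ sz.
have ndx : ~ in_supp x (fresh L) by apply: (fresh_nsupp Ex) => ? zi; rewrite /L !mem_cat zi !orbT.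
have ndy : ~ in_supp y (fresh L) by apply: (fresh_nsupp Ey) => ? zi; rewrite /L !mem_cat zi !orbT.
have ndz : ~ in_supp z (fresh L) by apply: (fresh_nsupp Ez) => ? zi; rewrite /L !mem_cat zi !orbT.
exists (fresh L); split => //; try (split => //; apply: freshP; by rewrite !inE eqxx ?orbT).
rewrite (abs_eq_all nx ny H1) // ?(abs_eq_all ny nz H2) //; apply: freshP; by rewrite !inE eqxx ?orbT.
Qed.

Lemma abs_eq_refl a x : nomel x -> abs_eq a x a x.
Proof.
case=> s [Hs Es]; exists (fresh (a :: s)).
have h3 : ~ in_supp x (fresh (a :: s)) by apply: (fresh_nsupp Es) => ? zi; rewrite inE zi orbT.
have h1 : fresh (a :: s) <> a by apply: freshP; rewrite inE eqxx.
by split.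
Qed.

Lemma abs_eq_swap a x b : nomel x -> (a = b \/ ~ in_supp x b) ->
  abs_eq a x b (nact (fperm_swap a b) x).
Proof.
move=> nx Hb; have nx' := nomel_act (fperm_swap a b) nx.
case: nx => s [Hs Es]; case: nx' => s' [Hs' Es'].
set L := [:: a; b] ++ s ++ s'.
have cs : ~ in_supp x (fresh L) by apply: (fresh_nsupp Es) => ? zi; rewrite /L !mem_cat zi !orbT.
have cs' : ~ in_supp (nact (fperm_swap a b) x) (fresh L) by apply: (fresh_nsupp Es') => ? zi; rewrite /L !mem_cat zi !orbT.
have ca : fresh L <> a by apply: freshP; rewrite !inE eqxx.
have cb : fresh L <> b by apply: freshP; rewrite !inE eqxx orbT.
exists (fresh L); split => //.
rewrite -nact_comp; apply: (act_agree Hs) => t ts /=.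
have tc : t <> fresh L by move=> e; apply: cs; rewrite Es -e.
have tb : a <> b -> t <> b by move=> ab e; case: Hb => // ; rewrite Es -e.
case: (natP a b) => [e|ab]; first by subst; swt.
have := tb ab; swt.
Qed.

End Nom.

Unset Implicit Arguments.

Definition names (w : word) : seq name := map snd w.

Lemma names_wact p w : names (wact p w) = map p (names w).
Proof. by rewrite /names /wact -!map_comp. Qed.

Lemma wact_agree (p q : fperm) w : (forall z : name, z \in names w -> p z = q z) -> wact p w = wact q w.
Proof.
elim: w => //= [[c d] w IH] E; rewrite /bact /= E ?inE ?eqxx // IH // => z zi.
by apply: E; rewrite inE zi orbT.
Qed.

Lemma wsupports w : supports (X := wnom) w (names w).
Proof. move=> p Hp /=; rewrite -[RHS]wact_id; apply: wact_agree => z /Hp. by []. Qed.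

Lemma win_supp w a : in_supp (X := wnom) w a <-> a \in names w.
Proof.
split; first by move/(_ _ (wsupports w)).
move=> ai t Ht; apply/negPn/negP => at'.
set e := fresh (t ++ names w).
have et : e \notin t by apply/negP => h; apply: (freshP (s := t ++ names w) (x := e)) => //; rewrite mem_cat h.
have ew : e \notin names w by apply/negP => h; apply: (freshP (s := t ++ names w) (x := e)) => //; rewrite mem_cat h orbT.
have E : wact (fperm_swap a e) w = w.
  apply: (Ht (fperm_swap a e)) => z zt /=; rewrite /sw.
  case: (natP z a) => [zae|_]; first by subst; rewrite zt in at'.
  case: (natP z e) => [zee|_] //; by subst; rewrite zt in et.
have : fperm_swap a e a \in names (wact (fperm_swap a e) w) by rewrite names_wact map_f.
by rewrite E /= /sw eqxx (negbTE ew).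
Qed.

Lemma wnomel w : nomel (X := wnom) w.
Proof. exists (names w); split; [exact: wsupports | exact: win_supp]. Qed.

Lemma wabs a v b u : abs_eq (X := wnom) a v b u ->
  u = wact (fperm_swap a b) v /\ (a <> b -> b \notin names v).
Proof.
case=> c [[ca cv] [cb cu] E].
rewrite win_supp in cv; rewrite win_supp in cu.
have E' : u = wact (fperm_swap b c) (wact (fperm_swap a c) v).
  by rewrite /= in E; rewrite E -wact_comp -[LHS]wact_id; apply: wact_ext => z /=; rewrite swK.
have P2 : a <> b -> b \notin names v.
  move=> ab; apply/negP => bv.
  have : fperm_swap a c b \in names (wact (fperm_swap a c) v) by rewrite names_wact map_f.
  have -> : fperm_swap a c b = b by swt.
  rewrite /= in E; rewrite E names_wact => /mapP [z zu /esym ez].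
  have : z = c by move: ez; swt.
  by move=> e; subst; apply: cu.
split => //.
rewrite E' -wact_comp; apply: wact_agree => z zi /=.
have zc : z <> c by move=> e; subst; apply: cv.
case: (natP a b) => [e|ab]; first by subst; swt.
have zb : z <> b by move=> e; subst; move: (P2 ab); rewrite zi.
swt.
Qed.

Fixpoint fnb (w : word) (a : name) : bool :=
  match w with
  | [::] => false
  | (b, x) :: w' => if b then (x != a) && fnb w' a else (x == a) || fnb w' a
  end.

Lemma fnP w a : fn w a <-> fnb w a.
Proof.
split.
  case=> w1 [w2 [-> H]]; elim: w1 H => /= [|[b x] w1 IH]; first by rewrite eqxx.
  rewrite inE negb_or => /andP[h1 h2]; case: b h1 => /= h1; last by rewrite IH ?orbT.
  rewrite IH // andbT; apply: contra h1 => /eqP ->; by [].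
elim: w => //= [[b x] w IH]; case: b.
  case/andP => xa /IH [w1 [w2 [-> h]]]; exists ((true, x) :: w1), w2; split => //.
  by rewrite inE negb_or h andbT; apply: contra xa => /eqP [->].
case/orP => [/eqP ->|/IH [w1 [w2 [-> h]]]]; first by exists [::], w.
by exists ((false, x) :: w1), w2.
Qed.

Lemma fnb_cat w t a : fnb (w ++ t) a = fnb w a || ((Br a \notin w) && fnb t a).
Proof.
elim: w => //= [[b x] w IH]; rewrite IH inE.
have -> : (Br a == (b, x)) = b && (a == x) by case: b.
case: b => /=; rewrite ?[a == x]eq_sym;
  by case: (x == a); case: (fnb w a); case: (Br a \in w); case: (fnb t a).
Qed.

Lemma fnb_names w a : fnb w a -> a \in names w.
Proof.
elim: w => //= [[b x] w IH]; rewrite inE; case: b => /=.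
  by case/andP => _ /IH ->; rewrite orbT.
by case/orP => [/eqP ->|/IH ->]; rewrite ?eqxx ?orbT.
Qed.

Lemma fnb_wact (p : fperm) w a : fnb (wact p w) (p a) = fnb w a.
Proof.
elim: w => //= [[b x] w IH]; rewrite /bact /= IH (inj_eq (can_inj (pfK p))).
by case: b.
Qed.

Lemma closedP w : closed_word w <-> forall a, ~~ fnb w a.
Proof.
split => H a; first by apply/negP => /fnP /H.
by move/fnP; apply/negP.
Qed.

Lemma wact_swap_id a w : wact (fperm_swap a a) w = w.
Proof. rewrite -[RHS]wact_id; apply: wact_ext => z /=; swt. Qed.

Lemma astep_closed w1 w2 : astep w1 w2 -> closed_word w1 -> closed_word w2.
Proof.
case=> w [a [v [b [u [-> -> /wabs [Eu Hb]]]]]].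
move/closedP => H; apply/closedP => x; move: (H x); rewrite !fnb_cat !negb_or.
case/andP => -> /=; case: (boolP (Br x \notin w)) => //= _.
case: (natP a b) => [e|ab].
  by subst; rewrite wact_swap_id.
move=> h; rewrite Eu -[x in fnb _ x](pinvK (fperm_swap a b) x) fnb_wact /=.
case: (natP b x) => [e|bx] /=; first by [].
case: (natP x a) => [e|xa].
  subst; rewrite /sw eqxx; apply/negP => /fnb_names; apply/negP; exact: Hb.
move: h; rewrite /sw (introF eqP xa) (introF eqP (nesym bx)) (introF eqP (nesym xa)) /=.
by [].
Qed.

Lemma astep_sym w1 w2 : astep w1 w2 -> astep w2 w1.
Proof.
case=> w [a [v [b [u [e1 e2 H]]]]]; exists w, b, u, a, v; split => //.
exact: abs_eq_sym.
Qed.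

Fixpoint cl (seen : seq name) (w : word) : bool :=
  match w with
  | [::] => true
  | (b, x) :: w' => (~~ b || (x \notin seen)) && cl (x :: seen) w'
  end.

Lemma cl_cat seen v u : cl seen (v ++ u) -> cl seen v.
Proof.
elim: v seen => //= [[b x] v IH] seen /andP[-> /IH] //.
Qed.

Lemma nf_gen n : forall s, size s <= n -> forall p seen,
  exists s', aeq (p ++ s) (p ++ s') /\ cl seen s'.
Proof.
elim: n => [|n IH] [|[bb x] s1] //= hs p seen; try by exists [::]; split => //; apply: rst_refl.
case: bb.
  set y := fresh (x :: seen ++ names s1).
  set s2 := wact (fperm_swap x y) s1.
  have yseen : y \notin seen by apply/negP => h; apply: (freshP (s := x :: seen ++ names s1) (x := y)) => //; rewrite inE mem_cat h orbT.
  have ys1 : y \notin names s1 by apply/negP => h; apply: (freshP (s := x :: seen ++ names s1) (x := y)) => //; rewrite inE mem_cat h !orbT.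
  have st : astep (p ++ (true, x) :: s1) (p ++ (true, y) :: s2).
    exists p, x, s1, y, s2; split => //.
    apply: abs_eq_swap; first exact: wnomel.
    by right; rewrite win_supp; apply/negP.
  have hs2 : size s2 <= n by rewrite size_map.
  have [s2' [h1 h2]] := IH s2 hs2 (p ++ [:: (true, y)]) (y :: seen).
  exists ((true, y) :: s2'); split; last by rewrite /= yseen.
  apply: rst_trans (rst_step _ _ _ _ st) _.
  by rewrite -!catA in h1.
have [s1' [h1 h2]] := IH s1 hs (p ++ [:: (false, x)]) (x :: seen).
exists ((false, x) :: s1'); split => //.
by rewrite -!catA in h1.
Qed.

Set Implicit Arguments. Unset Strict Implicit.

Lemma In_fst (T : Type) (s : seq (name * T)) a x : List.In (a, x) s -> a \in map fst s.
Proof. elim: s => //= [[b y] s IH] [[-> _]|/IH h]; by rewrite inE ?eqxx ?h ?orbT. Qed.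

Lemma swap_fix {X : nomType} {x : X} {s a e} :
  supports x s -> (forall z, z \in s -> z <> a /\ z <> e) -> nact (fperm_swap a e) x = x.
Proof. move=> Hs H; apply: (act_fix Hs) => z /H [za ze] /=; swt. Qed.

Lemma reach_split (B : ernna) (X : est B) w Y : reach X w Y ->
  forall w1 w2, w = w1 ++ w2 -> exists Z, reach X w1 Z /\ reach Z w2 Y.
Proof.
elim=> [q|q q' w' q'' t r IH|q l q' w' q'' t r IH] w1 w2.
- by case: w1 => //= <-; exists q; split; constructor.
- by move=> /IH [Z [h1 h2]]; exists Z; split => //; apply: reach_eps h1.
- case: w1 => [|l' w1] /=.
    by move=> <-; exists q; split; [constructor | apply: reach_let r].
  by case=> <- /IH [Z [h1 h2]]; exists Z; split => //; apply: reach_let h1.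
Qed.

Lemma reach_join (B : ernna) (X : est B) w1 Z w2 Y : reach X w1 Z -> reach Z w2 Y -> reach X (w1 ++ w2) Y.
Proof.
elim=> //= [q q' w' q'' t r IH|q l q' w' q'' t r IH] h.
  by apply: reach_eps t (IH h).
by apply: reach_let t (IH h).
Qed.

Lemma pinv_sw a b z : pinv (fperm_swap a b) z = sw a b z.
Proof. by []. Qed.

Section Orb.
Variable X : nomType.

Lemma so_sym (x y : X) : same_orbit x y -> same_orbit y x.
Proof. by case=> p <-; exists (fperm_inv p); rewrite act_inv. Qed.
Lemma so_trans (x y z : X) : same_orbit x y -> same_orbit y z -> same_orbit x z.
Proof. by case=> p <- [q <-]; exists (fperm_comp q p); rewrite nact_comp. Qed.

Lemma orbit_reps (L : nat -> X) (N : nat) : exists m (r : nat -> X), m <= N /\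
  (forall i j, i < m -> j < m -> same_orbit (r i) (r j) -> i = j) /\
  (forall i, i < N -> exists2 j, j < m & same_orbit (r j) (L i)).
Proof.
elim: N => [|N [m [r [hm [hd hc]]]]]; first by exists 0, L.
case: (classic (exists2 j, j < m & same_orbit (r j) (L N))) => [P|nP].
  exists m, r; split; first exact: leqW.
  split => // i; rewrite ltnS leq_eqVlt => /orP[/eqP ->|/hc] //.
exists m.+1, (fun j => if j == m then L N else r j); split; first exact: hm.
split.
  move=> i j; rewrite !ltnS [i <= m]leq_eqVlt [j <= m]leq_eqVlt => /orP[/eqP ei|hi] /orP[/eqP ej|hj].
  - by rewrite ei ej.
  - rewrite ei eqxx (ltn_eqF hj) => /so_sym h; case: nP; by exists j.
  - rewrite ej eqxx (ltn_eqF hi) => h; case: nP; by exists i.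
  - rewrite (ltn_eqF hi) (ltn_eqF hj); exact: hd.
move=> i; rewrite ltnS leq_eqVlt => /orP[/eqP ->|/hc [j hj hs]].
  by exists m; rewrite ?eqxx //; exists fperm_id; rewrite nact_id.
by exists j; rewrite ?(ltn_eqF hj) //; apply: ltnW.
Qed.

Lemma orbits_of_cover (L : nat -> X) (N : nat) :
  (forall x, exists2 i, i < N & same_orbit (L i) x) -> exists2 m, m <= N & has_orbits X m.
Proof.
move=> Hc; have [m [r [hm [hd hc]]]] := orbit_reps L N.
exists m => //; exists r; split => // x.
have [i hi h1] := Hc x; have [j hj h2] := hc i hi.
by exists j => //; apply: so_trans h2 h1.
Qed.
End Orb.

Fixpoint subs (s : seq name) : seq (seq name) :=
  if s is x :: s' then map (cons x) (subs s') ++ subs s' else [:: [::]].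

Lemma size_subs s : size (subs s) = 2 ^ size s.
Proof. by elim: s => //= x s IH; rewrite size_cat size_map IH expnS mul2n addnn. Qed.

Lemma filter_subs (P : pred name) s : filter P s \in subs s.
Proof.
elim: s => [|x s IH] /=; first by rewrite inE.
by rewrite mem_cat; case: (P x); rewrite ?map_f ?IH ?orbT.
Qed.

Section Aut.
Variable A : ernna.
Local Notation Q := (est A).
Hypothesis Hnom : is_nominal Q.
Hypothesis Halpha : forall (q : Q) a q' b q'', etr q (Some (Br a)) q' -> abs_eq a q' b q'' -> etr q (Some (Br b)) q''.
Hypothesis Hs0 : forall a, ~ in_supp (estart A) a.
Hypothesis Hfin : forall p (q : Q), efin (nact p q) = efin q.
Hypothesis Hequiv : forall p (q : Q) l q', etr q l q' -> etr (nact p q) (lact p l) (nact p q').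
Hypothesis Hbrp : forall q : Q, exists s : seq (name * Q), forall a q', etr q (Some (Pl a)) q' -> List.In (a, q') s.
Hypothesis Hbrb : forall q : Q, exists s : seq (name * Q), forall a q', etr q (Some (Br a)) q' ->
  exists b q'', List.In (b, q'') s /\ abs_eq a q' b q''.

Lemma qnomel (q : Q) : nomel q.
Proof. have [s Hs] := Hnom q; exact: nomel_of_least Hs. Qed.

Lemma list_supp (s : seq (name * Q)) : exists T : seq name,
  forall b q, List.In (b, q) s -> forall z, in_supp q z -> z \in T.
Proof.
elim: s => [|[b q] s [T HT]]; first by exists [::].
have [sq [_ Eq]] := qnomel q.
exists (sq ++ T) => b' q' /= [[_ <-]|hi] z hz; rewrite mem_cat.
  by rewrite (proj1 (Eq z) hz).
by rewrite (HT _ _ hi _ hz) orbT.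
Qed.

Lemma plain_name (q q' : Q) a : etr q (Some (Pl a)) q' -> in_supp q a.
Proof.
move=> tr; apply: NNPP => na.
have [sq [Hq Eq]] := qnomel q; have [s Hs] := Hbrp q.
set L := a :: sq ++ map fst s; set e := fresh L.
have fix1 : nact (fperm_swap a e) q = q.
  apply: (swap_fix Hq) => z zi; split; first by move=> ez; subst; apply: na; rewrite Eq.
  by apply: nesym; apply: freshP; rewrite /L inE mem_cat zi orbT.
have := Hequiv (fperm_swap a e) tr; rewrite fix1 /= /bact /= /sw eqxx => /Hs hi; have h := In_fst hi.
by apply: (freshP (s := L) (x := e)) => //; rewrite /L inE mem_cat h !orbT.
Qed.

Lemma plain_supp (q q' : Q) a y : etr q (Some (Pl a)) q' -> in_supp q' y -> in_supp q y.
Proof.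
move=> tr hy; apply: NNPP => ny.
have [sq [Hq Eq]] := qnomel q; have [s Hs] := Hbrp q; have [T HT] := list_supp s.
set L := y :: sq ++ T; set e := fresh L.
have fix1 : nact (fperm_swap y e) q = q.
  apply: (swap_fix Hq) => z zi; split; first by move=> ez; subst; apply: ny; rewrite Eq.
  by apply: nesym; apply: freshP; rewrite /L inE mem_cat zi orbT.
have := Hequiv (fperm_swap y e) tr; rewrite fix1 /= /bact /= => /Hs hi.
have : in_supp (nact (fperm_swap y e) q') e.
  by have := (proj2 (in_supp_eqv (fperm_swap y e) q' y) hy); rewrite /= /sw eqxx.
move/(HT _ _ hi) => h.
by apply: (freshP (s := L) (x := e)) => //; rewrite /L inE mem_cat h !orbT.
Qed.

Lemma bar_supp (q q'' : Q) b y : etr q (Some (Br b)) q'' -> in_supp q'' y -> y <> b -> in_supp q y.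
Proof.
move=> tr hy yb; apply: NNPP => ny.
have [sq [Hq Eq]] := qnomel q; have [s Hs] := Hbrb q; have [T HT] := list_supp s.
set L := [:: y; b] ++ sq ++ T ++ map fst s; set e := fresh L.
have eL : forall z, z \in L -> e <> z by move=> z; apply: freshP.
have fix1 : nact (fperm_swap y e) q = q.
  apply: (swap_fix Hq) => z zi; split; first by move=> ez; subst; apply: ny; rewrite Eq.
  by apply: nesym; apply: eL; rewrite /L !mem_cat zi !orbT.
have eb : e <> b by apply: eL; rewrite /L !inE eqxx orbT.
have ey : e <> y by apply: eL; rewrite /L !inE eqxx.
have := Hequiv (fperm_swap y e) tr; rewrite fix1 /= /bact /=.
have -> : sw y e b = b by swt.
case/Hs => b' [q2 [hi [c [[cb cq] [cb' cq2] E]]]].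
have he : in_supp (nact (fperm_swap y e) q'') e.
  by have := (proj2 (in_supp_eqv (fperm_swap y e) q'' y) hy); rewrite /= /sw eqxx.
have ce : c <> e by move=> ce; subst; apply: cq.
have : in_supp (nact (fperm_swap b c) (nact (fperm_swap y e) q'')) e.
  have := (proj2 (in_supp_eqv (fperm_swap b c) _ e) he).
  by have -> : fperm_swap b c e = e by rewrite /=; swt.
rewrite E => /in_supp_eqv' /=.
have eb' : e <> b' by apply: eL; rewrite /L !mem_cat (In_fst hi) !orbT.
have -> : sw b' c e = e by swt.
move/(HT _ _ hi) => h.
by apply: (eL e) => //; rewrite /L !mem_cat h !orbT.
Qed.


Local Notation ND := (ndnom A).

Definition mk (q : Q) (N : name -> Prop) : ND.
Proof.
refine (exist _ (restr q (fun a => N a /\ in_supp q a)) _).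
by exists q, (fun a => N a /\ in_supp q a); split => // a [].
Defined.

Lemma restr_ext (q : Q) (N M : name -> Prop) : (forall a, N a <-> M a) -> restr q N = restr q M.
Proof.
move=> E; apply: setext => y; split; case=> p Hp ->; exists p => // a /E; exact: Hp.
Qed.

Lemma restr_mem (q : Q) N : restr q N q.
Proof. by exists fperm_id; rewrite ?nact_id. Qed.

Lemma restr_act (q : Q) N (s : fperm) : fixes s N -> restr (nact s q) N = restr q N.
Proof.
move=> Hs; apply: setext => y; split.
  case=> t Ht ->; exists (fperm_comp t s); first by move=> a Na /=; rewrite Hs ?Ht.
  by rewrite nact_comp.
case=> t Ht ->; exists (fperm_comp t (fperm_inv s)).
  move=> a Na /=; rewrite Ht //; rewrite -{1}(Hs a Na) pfK //.
by rewrite nact_comp act_inv.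
Qed.

Lemma mk_rep (q : Q) N : (forall a, N a -> in_supp q a) -> is_rep (mk q N) q N.
Proof. move=> H; split => //=; apply: restr_ext => a; split => [[]|h] //; split => //; exact: H. Qed.

Lemma rep_mk (X : ND) q N : is_rep X q N -> X = mk q N.
Proof.
case=> H E; apply: ndeq; rewrite E /=; apply: restr_ext => a; split => [h|[]//]; split => //; exact: H.
Qed.

Lemma ex_rep (X : ND) : exists q N, is_rep X q N.
Proof. case: X => S [q [N [H E]]]; by exists q, N. Qed.

Lemma mk_ext (q : Q) (N M : name -> Prop) : (forall a, in_supp q a -> (N a <-> M a)) -> mk q N = mk q M.
Proof.
move=> E; apply: ndeq => /=; apply: restr_ext => a; split; case=> h1 h2; split => //; by apply/(E _ h2).
Qed.

Lemma mk_act (p : fperm) (q : Q) N : ndact p (mk q N) = mk (nact p q) (fun a => N (pinv p a)).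
Proof.
apply: ndeq; rewrite /= img_restr; apply: restr_ext => a /=.
by rewrite in_supp_eqv'.
Qed.

Lemma mk_act_fix (q : Q) N (s : fperm) : (forall a, N a -> in_supp q a) -> fixes s N ->
  mk (nact s q) N = mk q N.
Proof.
move=> H Hs; apply: ndeq => /=.
rewrite (@restr_ext _ (fun a => N a /\ in_supp (nact s q) a) N); last first.
  move=> a; split => [[]|h] //; split => //.
  by rewrite -(Hs a h); apply/in_supp_eqv; exact: H.
rewrite (@restr_ext q (fun a => N a /\ in_supp q a) N); last first.
  by move=> a; split => [[]|h] //; split => //; exact: H.
exact: restr_act.
Qed.

Lemma supp_list (q : Q) : exists s, supports q s /\ forall a, in_supp q a <-> a \in s.
Proof. exact: qnomel. Qed.

Lemma supports_mk (q : Q) N t : (forall a, N a -> in_supp q a -> a \in t) -> supports (X := ND) (mk q N) t.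
Proof.
move=> Ht p Hp.
set M := fun a => N a /\ in_supp q a.
have -> : mk q N = mk q M by apply: mk_ext => a h; rewrite /M; split => [|[]]//.
change (ndact p (mk q M) = mk q M). rewrite mk_act.
have MP : forall a, M a -> p a = a by move=> a [h1 h2]; apply: Hp; exact: Ht.
have -> : mk (nact p q) (fun a => M (pinv p a)) = mk (nact p q) M.
  apply: mk_ext => a _; split => h.
    have e : p (pinv p a) = pinv p a by exact: MP.
    by rewrite pinvK in e; rewrite e.
  have e := MP a h; have e' : pinv p a = a by rewrite -{1}e pfK.
  by rewrite e'.
by apply: mk_act_fix => // a [].
Qed.

Lemma in_supp_mk (q : Q) N a : in_supp (X := ND) (mk q N) a <-> N a /\ in_supp q a.
Proof.
have [sq [Hq Eq]] := supp_list q.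
split.
  move=> h; have : a \in cfilter (fun a => N a /\ in_supp q a) sq.
    apply: h; apply: supports_mk => b h1 h2; rewrite mem_cfilter; split => //; by rewrite -Eq.
  by rewrite mem_cfilter; case.
case=> Na qa t Ht; apply: NNPP => /negP at'.
set e := fresh (a :: t ++ sq).
have et : e \notin t by apply/negP => h; apply: (freshP (s := a :: t ++ sq) (x := e)) => //; rewrite inE mem_cat h orbT.
have esq : e \notin sq by apply/negP => h; apply: (freshP (s := a :: t ++ sq) (x := e)) => //; rewrite inE mem_cat h !orbT.
have ea : e <> a by apply: freshP; rewrite inE eqxx.
have F : ndact (fperm_swap a e) (mk q N) = mk q N.
  apply: (Ht (fperm_swap a e)).
  move=> z zt /=; have za : z <> a by move=> e'; subst; rewrite zt in at'.
  have ze : z <> e by move=> e'; subst; rewrite zt in et.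
  swt.
have : proj1_sig (ndact (fperm_swap a e) (mk q N)) (nact (fperm_swap a e) q).
  by exists q => //; exact: restr_mem.
rewrite F.
case=> s Hs E.
have : in_supp (nact s q) a by rewrite -(Hs a (conj Na qa)); apply/in_supp_eqv.
rewrite -E in_supp_eqv' /= /sw eqxx Eq => h.
by rewrite h in esq.
Qed.

Lemma nd_nomel (X : ND) : nomel X.
Proof.
have [q [N HX]] := ex_rep X; rewrite (rep_mk HX).
have [sq [Hq Eq]] := supp_list q.
exists (cfilter (fun a => N a /\ in_supp q a) sq); split.
  by apply: supports_mk => b h1 h2; rewrite mem_cfilter; split => //; rewrite -Eq.
by move=> a; rewrite in_supp_mk mem_cfilter Eq; split => [[h1 h2]|[[h1 h2] h3]]; split => //; rewrite -Eq.
Qed.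

Lemma fin_mem (X : ND) x y : proj1_sig X x -> proj1_sig X y -> efin x = efin y.
Proof.
have [q [N [_ E]]] := ex_rep X; rewrite E.
by case=> s _ -> [t _ ->]; rewrite !Hfin.
Qed.

Lemma ndfin_mem (X : ND) x : proj1_sig X x -> ndfin X = efin x.
Proof.
move=> hx; rewrite /ndfin; case: (IndefiniteDescription.constructive_indefinite_description _ _) => y hy /=.
exact: (fin_mem hy hx).
Qed.

Lemma ndfin_mk (q : Q) N : ndfin (mk q N) = efin q.
Proof. apply: ndfin_mem; exact: restr_mem. Qed.

Lemma ndfin_act (p : fperm) (X : ND) : ndfin (ndact p X) = ndfin X.
Proof.
have [q [N HX]] := ex_rep X; rewrite (rep_mk HX) mk_act !ndfin_mk; exact: Hfin.
Qed.

Lemma rep_act (p : fperm) (X : ND) q N : is_rep X q N ->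
  is_rep (ndact p X) (nact p q) (fun a => N (pinv p a)).
Proof.
case=> H E; split; first by move=> a /H; rewrite in_supp_eqv'.
by rewrite /= E img_restr.
Qed.

Lemma rep_uniq (X : ND) q N q1 N1 : is_rep X q N -> is_rep X q1 N1 ->
  (forall a, N a <-> N1 a) /\ exists2 s, fixes s N & q1 = nact s q.
Proof.
move=> H H1; split.
  move=> a; have := in_supp_mk q N a; have := in_supp_mk q1 N1 a.
  rewrite -(rep_mk H) -(rep_mk H1) => ->; case: H => HN _; case: H1 => HN1 _.
  split => h; [have := HN _ h | have := HN1 _ h] => h2; firstorder.
case: H1 => _; case: H => _ E; rewrite E => E1.
by have : restr q1 N1 q1 := restr_mem q1 N1; rewrite -E1; case=> s Hs ->; exists s.
Qed.

Lemma ndtr_act (p : fperm) (X Y : ND) l : ndtr X l Y -> ndtr (ndact p X) (lact p l) (ndact p Y).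
Proof.
case: l => [[[] a]|] //=.
  case=> q [N [q' [N' [b [q'' [N'' [Z [h1 h2 h3 h4 [h5 h6]]]]]]]]].
  exists (nact p q), (fun a => N (pinv p a)), (nact p q'), (fun a => N' (pinv p a)), (p b),
    (nact p q''), (fun a => N'' (pinv p a)), (ndact p Z); split.
  - exact: rep_act.
  - exact: rep_act.
  - exact: (Hequiv p h3).
  - move=> c /h4 [hc hN]; split; first by rewrite in_supp_eqv'.
    by case: hN => [|e]; [left | right; rewrite -e pinvK].
  - split; first exact: rep_act.
    exact: (abs_eq_act p h6).
case=> q [N [q' [N' [h1 h2 h3 h4 h5]]]].
exists (nact p q), (fun a => N (pinv p a)), (nact p q'), (fun a => N' (pinv p a)); split.
- exact: rep_act.
- exact: rep_act.
- exact: (Hequiv p h3).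
- by move=> c /h4.
- by rewrite pfK.
Qed.

Lemma reach_act (p : fperm) (X : ND) w Y : reach (A := nd A) X w Y ->
  reach (A := nd A) (ndact p X) (wact p w) (ndact p Y).
Proof.
elim=> [q|q q' w' q'' t|q l q' w' q'' t r IH] //=; first by constructor.
apply: reach_let IH; exact: (ndtr_act p t).
Qed.

Lemma reach_cons (X : ND) l w Y : reach (A := nd A) X (l :: w) Y ->
  exists Z, ndtr X (Some l) Z /\ reach (A := nd A) Z w Y.
Proof.
move e: (l :: w) => ws h; case: h e => [q|q q' w' q'' t r|q l' q' w' q'' t r].
- by [].
- by case: t.
- by case=> -> ->; exists q'.
Qed.

Lemma fwd (q q' : Q) w : eps_free A -> reach q w q' ->
  reach (A := nd A) (mk q (in_supp q)) w (mk q' (in_supp q')).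
Proof.
move=> He; elim=> [q0|q0 q1 w' q'' t|q0 l q1 w' q'' t r IH]; first by constructor.
  by case: (He _ _ t).
apply: reach_let IH; case: l t => [[] a] t /=.
  exists q0, (in_supp q0), q1, (in_supp q1), a, q1, (in_supp q1), (mk q1 (in_supp q1)); split.
  - exact: mk_rep.
  - exact: mk_rep.
  - exact: t.
  - move=> c hc; split => //; case: (natP c a) => [->|ca]; [by right | left].
    exact: bar_supp t hc ca.
  - split; first exact: mk_rep.
    exact: abs_eq_refl (nd_nomel _).
exists q0, (in_supp q0), q1, (in_supp q1); split.
- exact: mk_rep.
- exact: mk_rep.
- exact: t.
- by move=> c; apply: plain_supp t.
- exact: plain_name t.
Qed.

Lemma mem_img (p : fperm) (W : ND) x : proj1_sig W x -> proj1_sig (ndact p W) (nact p x).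
Proof. by move=> h; exists x. Qed.

Lemma in_mk_supp (q : Q) N y : (forall a, N a -> in_supp q a) -> N y -> in_supp (X := ND) (mk q N) y.
Proof. by move=> H h; rewrite in_supp_mk; split => //; exact: H. Qed.

Lemma bwd (X : ND) w F : reach (A := nd A) X w F -> forall (p : Q) seen,
  proj1_sig X p -> (forall y, in_supp p y -> y \in seen) -> cl seen w ->
  exists p', reach p w p' /\ efin p' = ndfin F.
Proof.
elim=> [X0|X0 X1 w' F0 t|X0 l X1 w' F0 t rr IH] p seen hp hs hc.
- by exists p; split; [constructor | rewrite (ndfin_mem hp)].
- by case: t.
case: l t hc => [[] a] t /=.
  case/andP => aseen hc.
  case: t => q [N [q' [N' [b [q'' [N'' [Z [h1 h2 h3 h4 [h5 h6]]]]]]]]].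
  have := hp; rewrite (proj2 h1); case=> s Hs ep.
  set b1 := s b; set r := nact s q''.
  have tr1 : etr p (Some (Br b1)) r by rewrite ep; exact: (Hequiv s h3).
  have ap : ~ in_supp p a by move/hs => h; rewrite h in aseen.
  have rsupp : forall y, in_supp r y -> y = b1 \/ in_supp p y.
    move=> y; rewrite in_supp_eqv' => hy; case: (natP (pinv s y) b) => e.
      by left; rewrite /b1 -e pinvK.
    by right; rewrite ep in_supp_eqv'; exact: bar_supp h3 hy e.
  have [sY [_ EY]] := nd_nomel X1; have [sZ [_ EZ]] := nd_nomel Z.
  have [sr [_ Er]] := qnomel r.
  set L := [:: a; b; b1] ++ sY ++ sZ ++ sr ++ seen; set d := fresh L.
  have dL : forall z, z \in L -> d <> z by move=> z; apply: freshP.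
  have da : d <> a by apply: dL; rewrite !inE eqxx.
  have db : d <> b by apply: dL; rewrite !inE eqxx orbT.
  have db1 : d <> b1 by apply: dL; rewrite !inE eqxx !orbT.
  have dY : ~ in_supp X1 d by rewrite EY => h; apply: (dL d) => //; rewrite /L !mem_cat h !orbT.
  have dZ : ~ in_supp Z d by rewrite EZ => h; apply: (dL d) => //; rewrite /L !mem_cat h !orbT.
  have dr : ~ in_supp r d by rewrite Er => h; apply: (dL d) => //; rewrite /L !mem_cat h !orbT.
  set p' := nact (fperm_swap a d) (nact (fperm_swap b1 d) r).
  have p'supp : forall y, in_supp p' y -> y = a \/ y \in seen.
    move=> y; rewrite /p' in_supp_eqv' in_supp_eqv' !pinv_sw => hy.
    case: (natP y a) => [->|ya]; [by left | right].
    case: (natP y d) => [e|yd].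
      subst y; case: (natP a b1) => [e|ab1].
        have e2 : sw b1 d (sw a d d) = d by rewrite e; swt.
        by rewrite e2 in hy; exfalso; exact: (dr hy).
      have e2 : sw b1 d (sw a d d) = a by swt.
      by rewrite e2 in hy; case/rsupp: hy.
    case: (natP y b1) => [e|yb1].
      have e2 : sw b1 d (sw a d y) = d by swt.
      by rewrite e2 in hy; exfalso; exact: (dr hy).
    have e2 : sw b1 d (sw a d y) = y by swt.
    by rewrite e2 in hy; case/rsupp: hy => // /hs.
  have tr2 : etr p (Some (Br a)) p'.
    apply: (Halpha tr1); exists d; split.
    - by split.
    - split => // hd; case: (p'supp _ hd) => [//|h].
      by apply: (dL d) => //; rewrite /L !mem_cat h !orbT.
    by rewrite /p' swap_invol.
  have ep' : proj1_sig X1 p'.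
    have E := abs_eq_all (nd_nomel X1) (nd_nomel Z) h6 da db dY dZ.
    have -> : X1 = nact (fperm_swap a d) (nact (fperm_swap b d) Z) by rewrite -E swap_invol.
    rewrite /p'; apply: mem_img.
    have -> : nact (fperm_swap b1 d) r = nact (fperm_swap b d) (nact (fperm_swap b d) (nact (fperm_swap b1 d) r)) by rewrite swap_invol.
    apply: mem_img; rewrite (proj2 h5) /r -!nact_comp.
    exists (fperm_comp (fperm_comp (fperm_swap b d) (fperm_swap b1 d)) s) => //.
    move=> y hy /=; case: (natP y b) => [->|yb]; first by rewrite /b1; swt.
    case: (h4 y hy) => hq [hN|//].
    have ey : s y = y by apply: Hs.
    rewrite ey.
    have yb1 : y <> b1 by rewrite /b1 -ey => /(can_inj (pfK s)).
    have yd : y <> d.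
      move=> e; apply: dZ; rewrite -e (rep_mk h5); apply: in_mk_supp => //; by case: h5.
    swt.
  have hs' : forall y, in_supp p' y -> y \in a :: seen.
    by move=> y /p'supp [->|h]; rewrite inE ?eqxx ?h ?orbT.
  have [p'' [r1 r2]] := IH p' (a :: seen) ep' hs' hc.
  by exists p''; split => //; apply: reach_let tr2 r1.
move=> hc.
case: t => q [N [q' [N' [h1 h2 h3 h4 h5]]]].
have := hp; rewrite (proj2 h1); case=> s Hs ep.
have tr : etr p (Some (Pl a)) (nact s q').
  by rewrite ep; have := Hequiv s h3; rewrite /= /bact /= (Hs a h5).
have m1 : proj1_sig X1 (nact s q') by rewrite (proj2 h2); exists s => // c /h4; apply: Hs.
have m2 : forall y, in_supp (nact s q') y -> y \in a :: seen.
  move=> y; rewrite in_supp_eqv' => /(plain_supp h3); rewrite -in_supp_eqv' -ep => /hs h.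
  by rewrite inE h orbT.
have [p'' [r1 r2]] := IH (nact s q') (a :: seen) m1 m2 hc.
by exists p''; split => //; apply: reach_let tr r1.
Qed.

Lemma mk_eq_inv (q r : Q) N M : mk q N = mk r M -> (forall a, N a -> in_supp q a) ->
  (forall a, M a -> in_supp r a) -> (forall a, M a <-> N a) /\ exists2 s, fixes s M & q = nact s r.
Proof.
move=> E HN HM.
have H2 : is_rep (mk r M) q N by rewrite -E; exact: mk_rep HN.
exact: rep_uniq (mk_rep HM) H2.
Qed.

Lemma mk_sub_eq (q r : Q) N M P : mk q N = mk r M -> (forall a, N a -> in_supp q a) ->
  (forall a, M a -> in_supp r a) -> (forall y, P y -> N y) -> mk q P = mk r P.
Proof.
move=> E HN HM HP.
have [E1 [s Hs eq]] := mk_eq_inv E HN HM.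
rewrite eq mk_act_fix //.
- by move=> y /HP /E1 /HM.
- by move=> y /HP /E1 /Hs.
Qed.
Lemma ndtr_alpha (X Y Y' : ND) a b : ndtr X (Some (Br a)) Y -> abs_eq a Y b Y' -> ndtr X (Some (Br b)) Y'.
Proof.
case=> q [N [q' [N' [b0 [q'' [N'' [Z [h1 h2 h3 h4 [h5 h6]]]]]]]]] H.
have [q2 [N2 H2]] := ex_rep Y'.
exists q, N, q2, N2, b0, q'', N'', Z; split => //; split => //.
apply: abs_eq_trans (abs_eq_sym H) h6; exact: nd_nomel.
Qed.

Lemma drop_bar (Y Y' : ND) c x q1 N1 q' N' (M : name -> Prop) :
  ndtr Y (Some (Br c)) Y' -> is_rep Y q1 N1 -> is_rep Y' q' N' -> x <> c ->
  (forall y, M y -> N1 y) -> (forall y, N1 y -> y <> x -> M y) ->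
  ndtr (mk q1 M) (Some (Br c)) (mk q' (fun y => N' y /\ y <> x)).
Proof.
case=> q0 [N0 [q0' [N0' [b [q'' [N'' [Z [h1 h2 h3 h4 [h5 h6]]]]]]]]] r1 r2 xc HM1 HM2.
have [E01 _] := rep_uniq h1 r1.
have Esrc : mk q1 M = mk q0 M.
  apply: (mk_sub_eq (N := N1) (M := N0)).
  - by rewrite -(rep_mk r1) -(rep_mk h1).
  - by case: r1.
  - by case: h1.
  - exact: HM1.
set N2 := fun y => N'' y /\ (x <> b -> y <> x).
rewrite Esrc.
exists q0, M, q', (fun y => N' y /\ y <> x), b, q'', N2, (mk q'' N2); split.
- apply: mk_rep => y /HM1 /E01; by case: h1 => H _; apply: H.
- by apply: mk_rep => y [h _]; case: r2 => H _; apply: H.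
- exact: h3.
- move=> y [hy hx]; case: (h4 y hy) => hq hNb; split => //.
  case: (natP y b) => [->|yb]; [by right | left].
  have hN : N0 y by case: hNb.
  apply: HM2; first by apply/E01.
  by move=> e; subst y; apply: (hx yb).
split; first by apply: mk_rep => y [h _]; case: (h4 y h).
have [sY [_ EY]] := nd_nomel Y'; have [sZ [_ EZ]] := nd_nomel Z.
set L := [:: c; b; x] ++ sY ++ sZ; set d := fresh L.
have dL : forall z, z \in L -> d <> z by move=> z; apply: freshP.
have dc : d <> c by apply: dL; rewrite !inE eqxx.
have db : d <> b by apply: dL; rewrite !inE eqxx orbT.
have dx : d <> x by apply: dL; rewrite !inE eqxx !orbT.
have dY : ~ in_supp Y' d by rewrite EY => h; apply: (dL d) => //; rewrite /L !mem_cat h !orbT.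
have dZ : ~ in_supp Z d by rewrite EZ => h; apply: (dL d) => //; rewrite /L !mem_cat h !orbT.
have E := abs_eq_all (nd_nomel Y') (nd_nomel Z) h6 dc db dY dZ.
have HN' : forall y, N' y -> in_supp q' y by case: r2.
have HN'' : forall y, N'' y -> in_supp q'' y by case: h5.
have dN' : ~ N' d by move=> h; apply: dY; rewrite (rep_mk r2); exact: in_mk_supp.
have dN'' : ~ N'' d by move=> h; apply: dZ; rewrite (rep_mk h5); exact: in_mk_supp.
exists d; split.
- split => // /in_supp_mk [[h _] _]; exact: dN' h.
- split => // /in_supp_mk [[h _] _]; exact: dN'' h.
rewrite (rep_mk r2) (rep_mk h5) in E.
change (ndact (fperm_swap c d) (mk q' (fun y => N' y /\ y <> x)) =
        ndact (fperm_swap b d) (mk q'' N2)).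
change (ndact (fperm_swap c d) (mk q' N') = ndact (fperm_swap b d) (mk q'' N'')) in E.
rewrite !mk_act /= in E *.
have HP1 : forall y, N' (sw c d y) -> in_supp (nact (fperm_swap c d) q') y.
  by move=> y h; rewrite in_supp_eqv' /=; exact: HN'.
have HP2 : forall y, N'' (sw b d y) -> in_supp (nact (fperm_swap b d) q'') y.
  by move=> y h; rewrite in_supp_eqv' /=; exact: HN''.
have [E1 _] := mk_eq_inv E HP1 HP2.
rewrite (mk_sub_eq (P := fun a => N' (sw c d a) /\ sw c d a <> x) E HP1 HP2); last by move=> y [].
apply: mk_ext => y _; rewrite /N2; split.
  case=> k1 k2; split; first exact/E1.
  move=> xb e; apply: k2; move: e; swt.
case=> k1 k2; split; first exact/E1.
move=> e; case: (natP x b) => [exb|xb].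
  rewrite exb in e xc; have ey : sw b d y = d by move: e; swt.
  by apply: dN''; rewrite -ey.
apply: (k2 xb); move: e; swt.
Qed.

Lemma drop_reach (Y : ND) v F : reach (A := nd A) Y v F -> forall q N x, is_rep Y q N ->
  x \notin names v ->
  exists F', reach (A := nd A) (mk q (fun y => N y /\ y <> x)) v F' /\ ndfin F' = ndfin F.
Proof.
elim=> [Y0|Y0 Y1 w' F0 t|Y0 l Y1 w' F0 t rr IH] q N x hr hx.
- exists (mk q (fun y => N y /\ y <> x)); split; first constructor.
  rewrite ndfin_mk (ndfin_mem (x := q)) //; rewrite (proj2 hr); exact: restr_mem.
- by case: t.
move: hx; rewrite /names /= inE negb_or => /andP[/eqP xl hx].
case: l t xl => [[] c] t /= xc.
  have [q' [N' r']] := ex_rep Y1.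
  have t' := drop_bar (M := fun y => N y /\ y <> x) t hr r' xc (fun y (h : N y /\ y <> x) => proj1 h) (fun y h1 h2 => conj h1 h2).
  have [F' [r1 r2]] := IH q' N' x r' hx.
  by exists F'; split => //; exact: (@reach_let (nd A) _ _ _ _ _ t' r1).
case: t => q0 [N0 [q0' [N0' [h1 h2 h3 h4 h5]]]].
have [E01 _] := rep_uniq h1 hr.
have Esrc : mk q (fun y => N y /\ y <> x) = mk q0 (fun y => N0 y /\ y <> x).
  rewrite (mk_sub_eq (q := q) (r := q0) (N := N) (M := N0) (P := fun y => N y /\ y <> x)).
  - by apply: mk_ext => y _; split; case=> k1 k2; split => //; apply/E01.
  - by rewrite -(rep_mk hr) -(rep_mk h1).
  - by case: hr.
  - by case: h1.
  - by move=> y [].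
have [F' [r1 r2]] := IH q0' N0' x h2 hx.
exists F'; split => //; rewrite Esrc; apply: reach_let r1.
exists q0, (fun y => N0 y /\ y <> x), q0', (fun y => N0' y /\ y <> x); split => //.
- by apply: mk_rep => y [h _]; case: h1 => H _; apply: H.
- by apply: mk_rep => y [h _]; case: h2 => H _; apply: H.
- by move=> y [/h4 k1 k2].
- by split => //; apply: nesym.
Qed.

Lemma rename_reach (X0 : ND) w a v b u F : reach (A := nd A) X0 (w ++ Br a :: v) F ->
  abs_eq (X := wnom) a v b u ->
  exists F', reach (A := nd A) X0 (w ++ Br b :: u) F' /\ ndfin F' = ndfin F.
Proof.
move=> h /wabs [Eu Hb].
case: (natP a b) => [e|ab].
  by subst b; exists F; rewrite Eu wact_swap_id.
have bv := Hb ab.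
have [X1 [r1 r2]] := reach_split h erefl.
have [Y1 [t rr]] := reach_cons r2.
have [q1 [N1 hX]] := ex_rep X1; have [q1' [N1' hY]] := ex_rep Y1.
have t' := drop_bar (M := N1) t hX hY (nesym ab) (fun y h => h) (fun y h _ => h).
rewrite -(rep_mk hX) in t'.
have [F' [r3 r4]] := drop_reach rr hY bv.
set W := mk q1' (fun y => N1' y /\ y <> b) in t' r3.
have bW : ~ in_supp W b by rewrite /W in_supp_mk => [[[_ ]]].
have t2 := ndtr_alpha t' (abs_eq_swap (nd_nomel W) (or_intror bW)).
have r5 := reach_act (fperm_swap a b) r3.
exists (ndact (fperm_swap a b) F'); split; last by rewrite ndfin_act.
apply: reach_join r1 _; rewrite Eu; exact: (@reach_let (nd A) _ _ _ _ _ t2 r5).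
Qed.

Lemma ndstartE : ndstart A = mk (estart A) (in_supp (estart A)).
Proof. by apply: ndeq => /=; apply: restr_ext => a; split => [h|[]//]; split. Qed.

Lemma L0_fwd w : eps_free A -> L0 A w -> L0 (nd A) w.
Proof.
move=> He [hc H]; split => //.
case: H => [[_ [q [r e]]]|[v [u [-> [hv [q [r e]]]]]]].
  left; split; first by left.
  exists (mk q (in_supp q)); split; last by rewrite /= ndfin_mk.
  by rewrite /= ndstartE; exact: fwd.
right; exists v, u; split => //; split => //.
exists (mk q (in_supp q)); split; last by rewrite /= ndfin_mk.
by rewrite /= ndstartE; exact: fwd.
Qed.

Lemma cat_split (w t v0 u0 : word) : w ++ t = v0 ++ u0 ->
  (exists t1, v0 = w ++ t1 /\ t = t1 ++ u0) \/ (exists w3, w = v0 ++ w3 /\ u0 = w3 ++ t).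
Proof.
elim: w v0 => [|x w IH] v0 /=.
  by move=> ->; left; exists v0.
case: v0 => [|y v0] /=.
  by move=> <-; right; exists (x :: w).
case=> -> /IH [[t1 [-> ->]]|[w3 [-> ->]]]; [left; by exists t1 | right; by exists w3].
Qed.

Lemma L0_astep w1 w2 : astep w1 w2 -> L0 (nd A) w1 -> L0 (nd A) w2.
Proof.
move=> st [hc H]; split; first exact: astep_closed st hc.
move: st => [w [a [v [b [u [e1 e2 hab]]]]]]; subst.
case: H => [[_ [F [r e]]]|[v0 [u0 [E [hv [F [r e]]]]]]].
  have [F' [r' e']] := rename_reach r hab.
  by left; split; [left | exists F'; split => //=; rewrite e'].
right; case: (cat_split E) => [[[|l v'] [ev et]]|[w3 [ew eu]]].
- by rewrite ev cats0 in r; exists w, (Br b :: u); split => //; split => //; exists F.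
- case: et => el ev'; subst l v.
  have [Eu Hb] := wabs _ _ _ _ hab.
  have hab' : abs_eq (X := wnom) a v' b (wact (fperm_swap a b) v').
    apply: abs_eq_swap; first exact: wnomel.
    case: (natP a b) => [|ab]; [by left | right].
    rewrite win_supp => h; move: (Hb ab); rewrite /names map_cat mem_cat.
    by rewrite /names in h; rewrite h.
  rewrite ev in r; have [F' [r' e']] := rename_reach r hab'.
  exists (w ++ Br b :: wact (fperm_swap a b) v'), (wact (fperm_swap a b) u0); split.
    by rewrite Eu /wact map_cat -catA.
  by split => //; exists F'; split => //=; rewrite e'.
- exists v0, (w3 ++ Br b :: u); split; first by rewrite ew -catA.
  by split => //; exists F.
Qed.

Lemma L0_aeq w w' : aeq w w' -> (L0 (nd A) w <-> L0 (nd A) w').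
Proof.
elim=> [x y st|x|x y _ IH|x y z _ IH1 _ IH2].
- by split; [apply: L0_astep | apply: L0_astep; apply: astep_sym].
- by [].
- by split; move/IH.
- by split; [move/IH1/IH2 | move/IH2/IH1].
Qed.

Lemma L0_bwd w : L0 (nd A) w -> Lalpha A w.
Proof.
move=> h.
have [w' [E hcl]] := nf_gen (size w) w (leqnn _) [::] [::].
rewrite /= in E.
have [hc H] := proj1 (L0_aeq E) h.
have st : proj1_sig (ndstart A) (estart A) by exact: restr_mem.
have ss : forall y, in_supp (estart A) y -> y \in [::] by move=> y /Hs0.
exists w'; last by apply: rst_sym.
split => //.
case: H => [[_ [F [r e]]]|[v [u [ev [hv [F [r e]]]]]]].
  have [p' [r' e']] := bwd r st ss hcl.
  by left; split; [left | exists p'; split => //=; rewrite e'].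
rewrite ev in hcl; have [p' [r' e']] := bwd r st ss (cl_cat _ _ _ hcl).
by right; exists v, u; split => //; split => //; exists p'; split => //=; rewrite e'.
Qed.

Lemma degree_nd k : degree A k -> degree (nd A) k.
Proof.
case=> H1 [q0 [s0 [u0 z0 e0]]]; split.
  move=> X; have [q [N hr]] := ex_rep X; rewrite (rep_mk hr).
  have [m hm [s [us zs es]]] := H1 q.
  exists (size (cfilter N s)).
    by rewrite size_filter (leq_trans (count_size _ _)) // zs.
  exists (cfilter N s); split => //; first exact: filter_uniq.
  move=> a; rewrite in_supp_mk mem_cfilter es; by [].
exists (mk q0 (in_supp q0)), s0; split => // a.
by rewrite in_supp_mk -e0; split => [[]|h].
Qed.

Lemma orbits_nd k n : degree A k -> has_orbits Q n ->
  exists2 m, m <= n * 2 ^ k & has_orbits ND m.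
Proof.
case=> H1 _ [rA [_ hcov]].
have H2 : forall q : Q, exists s : seq name, size s <= k /\ forall a, in_supp q a <-> a \in s.
  by move=> q; have [m hm [s [_ zs es]]] := H1 q; exists s; rewrite zs.
pose sf (q : Q) := proj1_sig (IndefiniteDescription.constructive_indefinite_description _ (H2 q)).
have sfP : forall q, size (sf q) <= k /\ forall a, in_supp q a <-> a \in sf q.
  by move=> q; rewrite /sf; case: (IndefiniteDescription.constructive_indefinite_description _ _).
pose L (idx : nat) : ND := mk (rA (idx %/ 2 ^ k))
   (fun a => a \in nth [::] (subs (sf (rA (idx %/ 2 ^ k)))) (idx %% 2 ^ k)).
apply: (orbits_of_cover (L := L)) => X.
have [q [N0 hr]] := ex_rep X; rewrite (rep_mk hr).
have [i hi [p ep]] := hcov q.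
set s := sf (rA i); have [zs es] := sfP (rA i).
set S := cfilter (fun a => N0 (p a)) s.
have Sin : S \in subs s by exact: filter_subs.
set j := index S (subs s).
have hj : j < 2 ^ k.
  apply: (leq_trans (n := 2 ^ size s)); first by rewrite -size_subs index_mem.
  by apply: leq_pexp2l.
have p2 : 0 < 2 ^ k by rewrite expn_gt0.
have Ei : (i * 2 ^ k + j) %/ 2 ^ k = i by rewrite divnMDl // divn_small ?addn0.
have Ej : (i * 2 ^ k + j) %% 2 ^ k = j by rewrite modnMDl modn_small.
exists (i * 2 ^ k + j); first by nia.
exists p; rewrite /L Ei Ej nth_index //.
change (ndact p (mk (rA i) (fun a => a \in S)) = mk q N0).
rewrite mk_act ep; apply: mk_ext => a ha.
rewrite mem_cfilter pinvK -es -(pfK p (pinv p a)) pinvK -in_supp_eqv' ep.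
by split => [[]|h].
Qed.

Lemma main_sec k n : eps_free A -> degree A k -> has_orbits Q n ->
  (forall w, Lalpha A w <-> Lalpha (nd A) w) /\
  (forall w w', L0 (nd A) w -> aeq w w' -> L0 (nd A) w') /\
  degree (nd A) k /\ (exists2 m, m <= n * 2 ^ k & has_orbits (est (nd A)) m).
Proof.
move=> He Hd Ho; split; [|split; [|split]].
- move=> w; split.
  + case=> w0 h0 e0; exists w0 => //; exact: L0_fwd.
  + case=> w0 h0 e0; have [w1 h1 e1] := L0_bwd h0; exists w1 => //; exact: rst_trans e1 e0.
- by move=> w w' h e; apply/(L0_aeq e).
- exact: degree_nd.
- exact: orbits_nd.
Qed.

End Aut.



Theorem lemmaD5 (A : ernna) (k n : nat) :
  is_ernna A -> eps_free A -> degree A k -> has_orbits (est A) n ->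
  (forall w, Lalpha A w <-> Lalpha (nd A) w) /\
  (forall w w', L0 (nd A) w -> aeq w w' -> L0 (nd A) w') /\
  degree (nd A) k /\
  (exists2 m, m <= n * 2 ^ k & has_orbits (est (nd A)) m).
Proof.
case=> [[Hnom _ Hs0 Heq Hf] [Hal [Hbp [_ [Hbb _]]]]] He Hd Ho.
exact: (main_sec Hnom Hal Hs0 Hf Heq Hbp Hbb He Hd Ho).
Qed.
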